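(* Let $X,S\in\operatorname{rep}(Q)$, let $R$ be $R_d$ or $R_{d,\mathrm{str}}$, and let $V\subseteq\Phi(X)$, $W\subseteq\Phi(S)$ be $R$-submodules. Then the canonical map $\operatorname{Ext}^1_R(\Phi(S),\Phi(X))\to\operatorname{Ext}^1_R(W,\Phi(X)/V)$, induced by the inclusion $W\hookrightarrow\Phi(S)$ and the projection $\Phi(X)\twoheadrightarrow\Phi(X)/V$, is surjective.
   Context: $K=\mathbb{C}$; $Q$ a finite quiver, $\operatorname{rep}(Q)$ its finite-dimensional representations. For $d\geqslant1$, $Q_d$ has vertices $v(Q)\times\{1,\dots,d\}$, arrows $(i,r)\to(i,r+1)$ ($r\leqslant d-1$) and $(i,r)\to(j,r)$ for each arrow $i\to j$ of $Q$, $r\in\{1,\dots,d\}$. For $d\geqslant2$, $Q_{d,\mathrm{str}}$ has the same vertices and vertical arrows and arrows $(i,r)\to(j,r-1)$ for each arrow $i\to j$, $r\in\{2,\dots,d\}$. $R_d=KQ_d/I$, $R_{d,\mathrm{str}}=KQ_{d,\mathrm{str}}/I$ with $I$ the ideal identifying all paths with equal source and target. $\Phi(X)_{(i,r)}=X_i$, identity maps on vertical arrows, $X_{i\to j}$ on arrows coming from $i\to j$. *)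

(* Defs.v *)
(* Representations of a finite quiver Q, and modules over the
   bound quiver algebras R_d = K Q_d / I and R_{d,str} = K Q_{d,str} / I,
   realised as representations of Q_d (resp. Q_{d,str}) satisfying the
   commutativity relations. *)
From HB Require Import structures.
From mathcomp Require Import all_boot all_algebra.
Set Implicit Arguments.
Unset Strict Implicit.
Unset Printing Implicit Defensive.
Import GRing.Theory.
Local Open Scope ring_scope.

Record quiver := Quiver {
  qv : finType;
  qa : finType;
  qsrc : qa -> qv;
  qtgt : qa -> qv }.

Record rep (K : fieldType) (Q : quiver) := Rep {
  rsp : qv Q -> vectType K;
  rmap : forall a : qa Q, {linear rsp (qsrc a) -> rsp (qtgt a)} }.

(* A module over R = R_d (str = false) or R = R_{d,str} (str = true).
   Levels are 0-based: the vertex (i, r) of the paper (1 <= r <= d) is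
   (i, r-1) here; only levels r < d are meaningful (spaces/maps at levels
   >= d are ignored by every notion below).
   - mv i r   : vertical arrow (i,r) -> (i,r+1)            (used for r+1 < d)
   - mh a r   : arrow coming from a : i -> j,
                (i, r) -> (j, r)      if str = false         (used for r < d)
                (i, r+1) -> (j, r)    if str = true          (used for r+1 < d)
   - mcomm    : the relations of I: the two paths around each square
                formed by a vertical arrow and arrows coming from a agree. *)
Record rmod (K : fieldType) (Q : quiver) (d : nat) (str : bool) := RMod {
  msp : qv Q -> nat -> lmodType K;
  mv : forall (i : qv Q) (r : nat), {linear msp i r -> msp i r.+1};
  mh : forall (a : qa Q) (r : nat),
         {linear msp (qsrc a) (r + str) -> msp (qtgt a) r};
  mcomm : forall (a : qa Q) (r : nat) (x : msp (qsrc a) (r + str)),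
    (r.+1 + str < d)%N ->
    mv (qtgt a) r (mh a r x) = mh a r.+1 (mv (qsrc a) (r + str) x) }.

Section Modules.
Variables (K : fieldType) (Q : quiver) (d : nat) (str : bool).
Local Notation rmodQ := (rmod K Q d str).

Definition vmap (M N : rmodQ) :=
  forall (i : qv Q) (r : nat), {linear msp M i r -> msp N i r}.

Definition is_hom (M N : rmodQ) (f : vmap M N) : Prop :=
  (forall i r x, (r.+1 < d)%N -> f i r.+1 (mv M i r x) = mv N i r (f i r x)) /\
  (forall a r x, (r + str < d)%N ->
     f (qtgt a) r (mh M a r x) = mh N a r (f (qsrc a) (r + str) x)).

Definition hom_injective (M N : rmodQ) (f : vmap M N) : Prop :=
  forall i r, (r < d)%N -> injective (f i r).

Definition hom_surjective (M N : rmodQ) (f : vmap M N) : Prop :=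
  forall i r, (r < d)%N -> forall y, exists x, f i r x = y.

Definition hom_eq (M N : rmodQ) (f g : vmap M N) : Prop :=
  forall i r x, (r < d)%N -> f i r x = g i r x.

Definition hom_comp (L M N : rmodQ) (g : vmap M N) (f : vmap L M) : vmap L N :=
  fun i r => (g i r \o f i r)%FUN.

Definition ses (A B C : rmodQ) (f : vmap A B) (g : vmap B C) : Prop :=
  [/\ is_hom f, is_hom g, hom_injective f, hom_surjective g &
      forall i r, (r < d)%N -> forall y, g i r y = 0 <-> exists x, y = f i r x].

(* Yoneda description of the canonical map
     Ext^1_R(C, A) -> Ext^1_R(C', A'),  [xi] |-> p_* h^* [xi]
   induced by p : A -> A' and h : C' -> C.
   [xi'] = p_* h^* [xi]  iff there is an extension eta of C' by A together
   with a morphism of extensions eta -> xi of the form (id_A, u, h)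
   (so [eta] = h^*[xi]) and a morphism eta -> xi' of the form (p, w, id_C')
   (so [xi'] = p_*[eta]). *)
Definition ext_maps_to (A A' C C' : rmodQ) (p : vmap A A') (h : vmap C' C)
    (B : rmodQ) (f : vmap A B) (g : vmap B C)
    (B' : rmodQ) (f' : vmap A' B') (g' : vmap B' C') : Prop :=
  exists (G : rmodQ) (f2 : vmap A G) (g2 : vmap G C'),
    ses f2 g2 /\
    exists (u : vmap G B) (w : vmap G B'),
      [/\ is_hom u, is_hom w,
          hom_eq (hom_comp u f2) f /\ hom_eq (hom_comp g u) (hom_comp h g2) &
          hom_eq (hom_comp w f2) (hom_comp f' p) /\ hom_eq (hom_comp g' w) g2].

Definition ext_map_surjective (A A' C C' : rmodQ) (p : vmap A A')
    (h : vmap C' C) : Prop :=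
  forall (B' : rmodQ) (f' : vmap A' B') (g' : vmap B' C'), ses f' g' ->
  exists (B : rmodQ) (f : vmap A B) (g : vmap B C),
    ses f g /\ ext_maps_to p h f g f' g'.

End Modules.

Definition Phi_sp (K : fieldType) (Q : quiver) (X : rep K Q)
  (i : qv Q) (r : nat) : lmodType K := rsp X i.

Definition Phi (K : fieldType) (Q : quiver) (d : nat) (str : bool)
  (X : rep K Q) : rmod K Q d str :=
  @RMod K Q d str (Phi_sp X)
    (fun i r => @idfun (rsp X i))
    (fun a r => rmap X a)
    (fun a r x _ => erefl).

(* Main.v *)
Require Import Defs.
From mathcomp Require Import all_boot all_algebra.
From mathcomp Require Import complex Rstruct.
From Stdlib Require Import Reals.
From HB Require Import structures.
From mathcomp Require Import all_boot all_algebra.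
From Stdlib Require Import Classical ClassicalEpsilon.
From mathcomp Require Import zify.
Set Implicit Arguments.
Unset Strict Implicit.
Unset Printing Implicit Defensive.
Import GRing.Theory.
Local Open Scope ring_scope.

Section LinAlg.
Variable K : fieldType.

Lemma image_vspace (V : vectType K) (W : lmodType K) (j : {linear W -> V}) :
  exists U : {vspace V}, forall x, x \in U <-> exists w, x = j w.
Proof.
suff: forall n (s : seq W), (\dim {:V} - \dim <<map j s>> <= n)%N ->
  exists U : {vspace V}, forall x, x \in U <-> exists w, x = j w.
  by move=> H; apply: (H _ [::]); exact: leq_subr.
elim=> [|n IH] s Hs.
- exists <<map j s>>%VS => x; split.
  + move=> Hx; have := @coord_span _ _ _ (in_tuple (map j s)) _ Hx => ->.
    exists (\sum_i coord (in_tuple (map j s)) i x *: s`_i).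
    rewrite linear_sum; apply: eq_bigr => i _; rewrite linearZ /=.
    by rewrite (nth_map 0) // -(size_map j).
  + case=> w ->; apply: contraT => Hn.
    have H1 : (<<map j s>> <= <<j w :: map j s>>)%VS.
      by rewrite span_cons addvSr.
    have := dimv_leqif_sup H1; move/ltn_leqif.
    have -> : (<<j w :: map j s>> <= <<map j s>>)%VS = false.
      apply/negbTE; apply: contra Hn => /subvP; apply; exact: memv_span (mem_head _ _).
    move=> /= Hlt; move: Hs; rewrite leqn0 subn_eq0 => Hs.
    have := dimvS (subvf <<j w :: map j s>>%VS).
    move=> Hf; have := leq_ltn_trans Hs Hlt; by rewrite ltnNge Hf.
- case: (classic (exists w, j w \notin <<map j s>>%VS)) => [[w Hw]|Hno].
  + have H1 : (<<map j s>> <= <<j w :: map j s>>)%VS.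
      by rewrite span_cons addvSr.
    have := dimv_leqif_sup H1; move/ltn_leqif.
    have -> : (<<j w :: map j s>> <= <<map j s>>)%VS = false.
      apply/negbTE; apply: contra Hw => /subvP; apply; exact: memv_span (mem_head _ _).
    move=> /= Hlt.
    have Hf := dimvS (subvf <<j w :: map j s>>%VS).
    apply: (IH (w :: s)) => /=.
    move: Hs Hlt Hf.
    move: (\dim fullv) (\dim <<map j s>>%VS) (\dim <<j w :: map j s>>%VS) => a b c.
    lia.
  + exists <<map j s>>%VS => x; split.
    * move=> Hx; have := @coord_span _ _ _ (in_tuple (map j s)) _ Hx => ->.
      exists (\sum_i coord (in_tuple (map j s)) i x *: s`_i).
      rewrite linear_sum; apply: eq_bigr => i _; rewrite linearZ /=.
      by rewrite (nth_map 0) // -(size_map j).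
    * case=> w ->; apply: NNPP => Hn; apply: Hno; exists w; exact/negP.
Qed.

Definition glmap (V : vectType K) (M : lmodType K) (r0 : {linear V -> M})
  (U : {vspace V}) n (b : n.-tuple V) (m : 'I_n -> M) (x : V) : M :=
  r0 x + \sum_(k < n) coord b k (x - projv U x) *: m k.

Fact glmap_lin V M r0 U n b m : linear (@glmap V M r0 U n b m).
Proof.
move=> a x y; rewrite /glmap linearP.
have -> : (a *: x + y) - projv U (a *: x + y) =
  a *: (x - projv U x) + (y - projv U y).
  by rewrite linearP scalerBr addrACA opprD.
have -> : \sum_(k < n) coord b k (a *: (x - projv U x) + (y - projv U y)) *: m k
  = a *: \sum_(k < n) coord b k (x - projv U x) *: m k
    + \sum_(k < n) coord b k (y - projv U y) *: m k.
  rewrite scaler_sumr -big_split; apply: eq_bigr => k _.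
  by rewrite linearP scalerDl scalerA.
by rewrite scalerDr addrACA.
Qed.

HB.instance Definition _ (V : vectType K) (M : lmodType K) (r0 : {linear V -> M})
  (U : {vspace V}) n (b : n.-tuple V) (m : 'I_n -> M) :=
  GRing.isLinear.Build K V M *:%R (@glmap V M r0 U n b m) (glmap_lin r0 U b m).

Lemma GL (V : vectType K) (W0 W M M' : lmodType K) (j : {linear W -> V})
  (e : {linear W0 -> W}) (q : {linear M -> M'}) (eps : {linear W -> M'})
  (rho0 : {linear V -> M}) (jinj : injective j)
  (Heps : forall w, exists m, q m = eps w)
  (H0 : forall w0, q (rho0 (j (e w0))) = eps (e w0)) :
  exists rho : {linear V -> M},
    (forall w0, rho (j (e w0)) = rho0 (j (e w0))) /\
    (forall w, q (rho (j w)) = eps w).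
Proof.
have [U0 HU0] := image_vspace [the {linear W0 -> V} of j \o e].
have [U1 HU1] := image_vspace j.
have U01 : (U0 <= U1)%VS.
  apply/subvP => y /HU0 [w0 ->]; apply/HU1; by exists (e w0).
set C := (U1 :&: U0^C)%VS.
set b := vbasis C.
have Hb : forall k : 'I_(\dim C), exists w, b`_k = j w.
  move=> k; apply/HU1.
  have : b`_k \in C by apply: vbasis_mem; apply: mem_nth; rewrite size_tuple.
  by rewrite memv_cap => /andP[].
pose ws k := proj1_sig (constructive_indefinite_description _ (Hb k)).
have Hws (k : 'I_(\dim C)) : b`_k = j (ws k) := proj2_sig (constructive_indefinite_description _ (Hb k)).
pose ms k := proj1_sig (constructive_indefinite_description _ (Heps (ws k))).
have Hms (k : 'I_(\dim C)) : q (ms k) = eps (ws k) :=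
  proj2_sig (constructive_indefinite_description _ (Heps (ws k))).
exists [the {linear V -> M} of glmap rho0 U0 b (fun k => ms k - rho0 b`_k)].
split.
- move=> w0; rewrite /= /glmap projv_id; last by apply/HU0; exists w0.
  rewrite subrr big1 ?addr0 // => k _; by rewrite linear0 scale0r.
- move=> w; rewrite /= /glmap.
  set x := j w.
  have Hx1 : x \in U1 by apply/HU1; exists w.
  have [w0 Hw0] : exists w0, projv U0 x = j (e w0) by apply/HU0; exact: memv_proj.
  set c := x - projv U0 x.
  have Hc : c \in C.
    rewrite memv_cap memv_projC andbT; apply: memvB => //.
    by move/subvP: U01; apply; exact: memv_proj.
  have Hcs := coord_vbasis Hc.
  set wc := \sum_(k < \dim C) coord b k c *: ws k.
  have Hjwc : j wc = c.
    rewrite Hcs linear_sum; apply: eq_bigr => k _; by rewrite linearZ /= Hws.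
  have Hw : w = e w0 + wc.
    apply: jinj; rewrite linearD /= -Hw0 Hjwc /c; by rewrite addrC subrK.
  rewrite linearD linear_sum /=.
  under eq_bigr => k _ do rewrite linearZ /= (raddfB q).
  rewrite (eq_bigr (fun k => coord b k c *: (eps (ws k) - q (rho0 b`_k))));
    last by move=> k _; congr (_ *: (_ - _)); exact: Hms.
  have -> : \sum_(k < \dim C) coord b k c *: (eps (ws k) - q (rho0 b`_k)) =
     eps wc - q (rho0 c).
    rewrite [in RHS]Hcs /wc !linear_sum /= -big_split /=; apply: eq_bigr => k _.
    by rewrite !linearZ /= scalerBr scalerN.
  rewrite addrA addrAC -(raddfB q) -(raddfB rho0).
  have -> : x - c = j (e w0) by rewrite /c opprB addrC subrK.
  by rewrite Hw linearD; congr (_ + _); exact: H0.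
Qed.

End LinAlg.

Section Pairs.
Variable K : fieldType.
Section P.
Variables (U1 U2 V1 V2 V : lmodType K).
Definition pmap (a : {linear U1 -> V1}) (h : {linear U2 -> V1})
  (b : {linear U2 -> V2}) (z : U1 * U2) : V1 * V2 := (a z.1 + h z.2, b z.2).
Fact pmap_lin a h b : linear (pmap a h b).
Proof. move=> c x y; rewrite /pmap /= !linearP. congr (_,_) => /=. by rewrite scalerDr addrACA. Qed.
HB.instance Definition _ a h b :=
  GRing.isLinear.Build K (U1 * U2)%type (V1 * V2)%type *:%R (pmap a h b) (pmap_lin a h b).
Definition inlm (z : U1) : U1 * U2 := (z, 0).
Fact inlm_lin : linear inlm.
Proof. by move=> c x y; rewrite /inlm; congr (_,_) => /=; rewrite scaler0 addr0. Qed.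
HB.instance Definition _ :=
  GRing.isLinear.Build K U1 (U1 * U2)%type *:%R inlm inlm_lin.
Definition sndm (z : U1 * U2) : U2 := z.2.
Fact sndm_lin : linear sndm.
Proof. by []. Qed.
HB.instance Definition _ :=
  GRing.isLinear.Build K (U1 * U2)%type U2 *:%R sndm sndm_lin.
Definition cmb (a : {linear U1 -> V}) (b : {linear U2 -> V}) (z : U1 * U2) : V :=
  a z.1 + b z.2.
Fact cmb_lin a b : linear (cmb a b).
Proof. move=> c x y; rewrite /cmb /= !linearP. by rewrite scalerDr addrACA. Qed.
HB.instance Definition _ a b :=
  GRing.isLinear.Build K (U1 * U2)%type V *:%R (cmb a b) (cmb_lin a b).
End P.
End Pairs.

Section Main.
Variables (K : fieldType) (Q : quiver) (d : nat) (str : bool).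
Variables (X S : rep K Q).
Local Notation rmodQ := (rmod K Q d str).
Variables (N W : rmodQ) (p : vmap (Phi d str X) N) (j : vmap W (Phi d str S)).
Hypotheses (Hd : (0 < d)%N) (Hp : is_hom p) (Hp_surj : hom_surjective p)
  (Hj : is_hom j) (Hj_inj : hom_injective j).
Variables (B' : rmodQ) (f' : vmap N B') (g' : vmap B' W).
Hypothesis (Hses : ses f' g').

Definition jl i r : {linear msp W i r -> rsp S i} := j i r.

Lemma jv i r w : (r.+1 < d)%N -> j i r.+1 (mv W i r w) = j i r w.
Proof. by move=> h; case: Hj => Hv _; rewrite Hv. Qed.

Lemma T_exists : exists T : forall i r, {linear rsp S i -> msp B' i r},
  (forall i r w, (r < d)%N -> g' i r (T i r (j i r w)) = w) /\
  (forall i r w, (r.+1 < d)%N ->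
     T i r.+1 (j i r.+1 (mv W i r w)) = mv B' i r (T i r (j i r w))).
Proof.
case: Hses => Hf' Hg' Hf'inj Hg'surj Hex.
have T0ex : forall i, exists T0 : {linear rsp S i -> msp B' i 0},
    forall w, g' i 0 (T0 (j i 0 w)) = w.
  move=> i.
  have := @GL K (rsp S i) (msp W i 0) (msp W i 0) (msp B' i 0) (msp W i 0)
    (jl i 0) [the {linear _ -> _} of \0] (g' i 0) [the {linear _ -> _} of idfun]
    [the {linear _ -> _} of \0] (Hj_inj Hd) (Hg'surj i 0 Hd).
  case; first by move=> w0 /=; rewrite !linear0.
  by move=> rho [_ H2]; exists rho.
pose T0 i := proj1_sig (constructive_indefinite_description _ (T0ex i)).
have HT0 i : forall w, g' i 0 (T0 i (j i 0 w)) = w :=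
  proj2_sig (constructive_indefinite_description _ (T0ex i)).
have stepex : forall i r (Tr : {linear rsp S i -> msp B' i r}),
  exists T' : {linear rsp S i -> msp B' i r.+1},
    (r.+1 < d)%N -> (forall w, g' i r (Tr (j i r w)) = w) ->
    (forall w, g' i r.+1 (T' (j i r.+1 w)) = w) /\
    (forall w, T' (j i r.+1 (mv W i r w)) = mv B' i r (Tr (j i r w))).
  move=> i r Tr.
  case: (classic ((r.+1 < d)%N /\ (forall w, g' i r (Tr (j i r w)) = w)));
    last first.
    by move=> Hn; exists [the {linear _ -> _} of \0] => h1 h2; case: Hn.
  case=> Hr HTr.
  have := @GL K (rsp S i) (msp W i r) (msp W i r.+1) (msp B' i r.+1)
    (msp W i r.+1)
    (jl i r.+1) (mv W i r) (g' i r.+1) [the {linear _ -> _} of idfun]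
    [the {linear _ -> _} of mv B' i r \o Tr] (Hj_inj Hr) (Hg'surj i r.+1 Hr).
  case.
    move=> w0 /=; rewrite /jl jv //.
    case: Hg' => Hg'v _; by rewrite Hg'v // HTr.
  move=> rho [H1 H2]; exists rho => _ _; split => // w.
  by rewrite H1 /= /jl jv.
pose step i r Tr := proj1_sig (constructive_indefinite_description _ (stepex i r Tr)).
have Hstep i r Tr := proj2_sig (constructive_indefinite_description _ (stepex i r Tr)).
pose T i := nat_rect (fun r => {linear rsp S i -> msp B' i r}) (T0 i) (step i).
have HT1 : forall i r w, (r < d)%N -> g' i r (T i r (j i r w)) = w.
  move=> i r; elim: r => [|r IH] w Hr; first exact: HT0.
  have := Hstep i r (T i r) Hr (fun w => IH w (ltnW Hr)).
  by case=> + _; apply.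
exists T; split => //.
move=> i r w Hr.
have := Hstep i r (T i r) Hr (fun w => HT1 i r w (ltnW Hr)).
by case=> _; apply.
Qed.


Lemma reach (s : qv Q) m r : (r <= m)%N -> (m + str < d)%N ->
  forall w : msp W s (r + str), exists w0 : msp W s (m + str),
    j s (r + str) w = j s (m + str) w0.
Proof.
elim: m r => [|m IH] r Hr Hm.
  by move: Hr; rewrite leqn0 => /eqP Er; subst r => w; exists w.
case: (ltngtP r m.+1) Hr => // [Hlt _|Er _]; last by subst r => w; exists w.
move=> w; have [w0 E0] := IH r Hlt (ltnW Hm) w.
exists (mv W s (m + str) w0); rewrite E0 jv //.
Qed.

Section HPart.
Variable T : forall i r, {linear rsp S i -> msp B' i r}.
Hypothesis HT1 : forall i r w, (r < d)%N -> g' i r (T i r (j i r w)) = w.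
Hypothesis HT2 : forall i r w, (r.+1 < d)%N ->
     T i r.+1 (j i r.+1 (mv W i r w)) = mv B' i r (T i r (j i r w)).

Definition Ef a r : {linear msp W (qsrc a) (r + str) -> msp B' (qtgt a) r} :=
  [the {linear _ -> _} of
    (mh B' a r \o T (qsrc a) (r + str) \o jl (qsrc a) (r + str))
    \- (T (qtgt a) r \o jl (qtgt a) r \o mh W a r)].

Lemma Ef_lift a r w : (r + str < d)%N ->
  exists x : rsp X (qtgt a), f' (qtgt a) r (p (qtgt a) r x) = Ef a r w.
Proof.
move=> Hr; have Hr' : (r < d)%N by apply: leq_ltn_trans Hr; exact: leq_addr.
case: Hses => Hf' Hg' Hf'inj Hg'surj Hex.
have : g' (qtgt a) r (Ef a r w) = 0.
  rewrite /Ef /= linearB /=.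
  case: Hg' => _ Hg'h; rewrite Hg'h // HT1 // HT1 //; exact: subrr.
move/(Hex _ _ Hr') => [n ->].
have [x Hx] := Hp_surj Hr' n.
by exists x; rewrite Hx.
Qed.

Lemma H_exists : exists H : forall a, {linear rsp S (qsrc a) -> rsp X (qtgt a)},
  forall a r w, (r + str < d)%N ->
    f' (qtgt a) r (p (qtgt a) r (H a (j (qsrc a) (r + str) w))) = Ef a r w.
Proof.
suff Ha : forall a, exists Ha : {linear rsp S (qsrc a) -> rsp X (qtgt a)},
    forall r w, (r + str < d)%N ->
    f' (qtgt a) r (p (qtgt a) r (Ha (j (qsrc a) (r + str) w))) = Ef a r w.
  exists (fun a => proj1_sig (constructive_indefinite_description _ (Ha a))).
  move=> a; exact: (proj2_sig (constructive_indefinite_description _ (Ha a))).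
move=> a.
case: Hses => Hf' Hg' Hf'inj Hg'surj Hex.
pose P m (Hm : {linear rsp S (qsrc a) -> rsp X (qtgt a)}) :=
  forall r, (r <= m)%N -> (r + str < d)%N -> forall w,
    f' (qtgt a) r (p (qtgt a) r (Hm (j (qsrc a) (r + str) w))) = Ef a r w.
have base : exists H0, (0 + str < d)%N -> P 0%N H0.
  case: (classic (0 + str < d)%N) => [h|hn]; last first.
    by exists [the {linear _ -> _} of \0] => h; case: hn.
  have := @GL K (rsp S (qsrc a)) (msp W (qsrc a) (0 + str)) (msp W (qsrc a) (0 + str))
    (rsp X (qtgt a)) (msp B' (qtgt a) 0) (jl _ _) [the {linear _ -> _} of \0]
    [the {linear _ -> _} of f' (qtgt a) 0 \o p (qtgt a) 0] (Ef a 0)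
    [the {linear _ -> _} of \0] (Hj_inj h) (fun w => Ef_lift w h).
  case; first by move=> w0 /=; rewrite !linear0 addr0.
  move=> rho [_ H2]; exists rho => _ r; rewrite leqn0 => /eqP Er; subst r => _ w.
  exact: H2.
have step : forall m Hm, exists H', (m.+1 + str < d)%N -> P m Hm -> P m.+1 H'.
  move=> m Hm.
  case: (classic ((m.+1 + str < d)%N /\ P m Hm)) => [[hm HP]|hn]; last first.
    by exists [the {linear _ -> _} of \0] => h1 h2; case: hn.
  have hm' : (m + str < d)%N by apply: ltnW.
  have hm2 : ((m + str).+1 < d)%N := hm.
  have hm1 : (m.+1 < d)%N by apply: leq_ltn_trans hm; exact: leq_addr.
  have := @GL K (rsp S (qsrc a)) (msp W (qsrc a) (m + str)) (msp W (qsrc a) (m.+1 + str))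
    (rsp X (qtgt a)) (msp B' (qtgt a) m.+1) (jl _ _) (mv W (qsrc a) (m + str))
    [the {linear _ -> _} of f' (qtgt a) m.+1 \o p (qtgt a) m.+1] (Ef a m.+1)
    Hm (Hj_inj hm) (fun w => Ef_lift w hm).
  case.
    move=> w0; rewrite /Ef /jl /= (HT2 w0 hm2) -(@mcomm _ _ _ _ B' a m) //.
    rewrite -(@mcomm _ _ _ _ W a m) // (HT2 _ hm1) -linearB.
    rewrite (jv w0 hm2).
    case: Hp => Hpv _; case: Hf' => Hf'v _.
    rewrite Hpv // Hf'v // HP //.
  move=> rho [H1 H2]; exists rho => _ _ r Hr Hrd w.
  case: (ltngtP r m.+1) Hr => // [Hlt _|Er _]; last first.
    subst r; exact: H2.
  rewrite ltnS in Hlt; have [w0 E0] := reach Hlt hm' w.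
  have -> : rho (j (qsrc a) (r + str) w) = Hm (j (qsrc a) (r + str) w).
    rewrite E0 -(jv _ hm); exact: H1.
  exact: HP.
pose Hs := nat_rect (fun m => {linear rsp S (qsrc a) -> rsp X (qtgt a)})
  (proj1_sig (constructive_indefinite_description _ base))
  (fun m Hm => proj1_sig (constructive_indefinite_description _ (step m Hm))).
have HP : forall m, (m + str < d)%N -> P m (Hs m).
  elim=> [|m IH] hm.
    exact: (proj2_sig (constructive_indefinite_description _ base)).
  apply: (proj2_sig (constructive_indefinite_description _ (step m (Hs m)))) => //.
  by apply: IH; apply: ltnW.
exists (Hs (d.-1 - str)%N) => r w Hr.
apply: HP => //; lia.
Qed.

End HPart.

Section Build.
Variable H : forall a, {linear rsp S (qsrc a) -> rsp X (qtgt a)}.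

Definition Erep : rep K Q :=
  @Rep K Q (fun i => (rsp X i * rsp S i)%type)
    (fun a => [the {linear _ -> _} of pmap (rmap X a) (H a) (rmap S a)]).

Definition Gsp i r : lmodType K := (rsp X i * msp W i r)%type.
Definition Gv i r : {linear Gsp i r -> Gsp i r.+1} :=
  [the {linear _ -> _} of pmap [the {linear _ -> _} of idfun]
     [the {linear _ -> _} of \0] (mv W i r)].
Definition Gh a r : {linear Gsp (qsrc a) (r + str) -> Gsp (qtgt a) r} :=
  [the {linear _ -> _} of pmap (rmap X a)
     [the {linear _ -> _} of H a \o jl (qsrc a) (r + str)] (mh W a r)].

Lemma Gcomm a r (x : Gsp (qsrc a) (r + str)) : (r.+1 + str < d)%N ->
  Gv (qtgt a) r (Gh a r x) = Gh a r.+1 (Gv (qsrc a) (r + str) x).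
Proof.
move=> h; case: x => x w; rewrite /Gv /Gh /= /pmap /= /jl.
have h2 : ((r + str).+1 < d)%N := h.
by rewrite (@mcomm _ _ _ _ W a r) // (jv w h2) !addr0.
Qed.

Definition Gmod : rmodQ := @RMod K Q d str Gsp Gv Gh Gcomm.

End Build.

Lemma final : exists (B : rmodQ) (f : vmap (Phi d str X) B)
  (g : vmap B (Phi d str S)), ses f g /\ ext_maps_to p j f g f' g'.
Proof.
have [T [HT1 HT2]] := T_exists.
have [H HH] := H_exists HT1 HT2.
case: (Hses) => Hf' Hg' Hf'inj Hg'surj Hex.
exists (Phi d str (Erep H)).
exists (fun i r => [the {linear _ -> _} of @inlm _ (rsp X i) (rsp S i)]).
exists (fun i r => [the {linear _ -> _} of @sndm _ (rsp X i) (rsp S i)]).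
split.
  split.
  - split=> [i r x _|a r x _] //=.
    by rewrite /inlm /pmap /= !linear0 !addr0.
  - by split=> [i r [x s] _|a r [x s] _].
  - by move=> i r _ x y [].
  - by move=> i r _ y; exists (0, y).
  - move=> i r _ [x s]; rewrite /sndm /=; split=> [->|[x' E]]; first by exists x.
    by move: E; rewrite /inlm => -[_ ->].
exists (Gmod H).
exists (fun i r => [the {linear _ -> _} of @inlm _ (rsp X i) (msp W i r)]).
exists (fun i r => [the {linear _ -> _} of @sndm _ (rsp X i) (msp W i r)]).
split.
  split.
  - split=> [i r x _|a r x _] /=;
    by rewrite /inlm /pmap /= ?linear0 ?addr0.
  - by split=> [i r [x s] _|a r [x s] _].
  - by move=> i r _ x y [].
  - by move=> i r _ y; exists (0, y).
  - move=> i r _ [x s]; rewrite /sndm /=; split=> [->|[x' E]]; first by exists x.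
    by move: E; rewrite /inlm => -[_ ->].
exists (fun i r => [the {linear _ -> _} of
   pmap [the {linear _ -> _} of idfun] [the {linear _ -> _} of \0] (jl i r)]).
exists (fun i r => [the {linear _ -> _} of
   cmb [the {linear _ -> _} of f' i r \o p i r] [the {linear _ -> _} of T i r \o jl i r]]).
split.
- split=> [i r [x w] Hr|a r [x w] Hr] /=; rewrite /pmap /= /jl.
    by rewrite (jv w Hr) !addr0.
  by case: Hj => _ Hjh; rewrite Hjh //= !addr0.
- split=> [i r [x w] Hr|a r [x w] Hr] /=; rewrite /pmap /cmb /= /jl.
    case: Hp => Hpv _; case: Hf' => Hf'v _.
    by rewrite addr0 (HT2 _ _ w Hr) linearD -Hf'v // -Hpv.
  case: Hp => _ Hph; case: Hf' => _ Hf'h.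
  rewrite [in RHS]linearD -Hf'h // -Hph //=.
  rewrite !linearD /= -!addrA; congr (_ + _).
  rewrite HH //= /Ef /= /jl.
  by rewrite subrK.
- split=> i r x _ /=; rewrite /inlm /pmap /= /jl ?linear0 ?addr0 //.
- split=> i r x Hr /=; rewrite /inlm /cmb /= /jl ?linear0 ?addr0 //.
  case: x => x w; rewrite /cmb /sndm /= linearD /= HT1 //.
  have : g' i r (f' i r (p i r x)) = 0 by apply/(Hex _ _ Hr); exists (p i r x).
  by move=> ->; rewrite add0r.
Qed.

End Main.

Theorem lemma3p6 (Q : quiver) (d : nat) (str : bool)
  (Hd : (0 < d)%N) (Hstr : str -> (1 < d)%N)
  (X S : rep (R[i])%C Q)
  (N : rmod (R[i])%C Q d str) (p : vmap (Phi d str X) N)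
  (Hp : is_hom p) (Hp_surj : hom_surjective p)
  (W : rmod (R[i])%C Q d str) (j : vmap W (Phi d str S))
  (Hj : is_hom j) (Hj_inj : hom_injective j) :
  ext_map_surjective p j.
Proof.
move=> B' f' g' Hses.
exact: (final Hd Hp Hp_surj Hj Hj_inj Hses).
Qed.
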